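(* Let $n\ge3$ and $B_n=\langle a,b\mid ba=b^n\rangle$. 1. $\rho(B_n)=n-1>\rho(L)$ for every $L\in\mathcal L(B_n)$. 2. For every $\ell\ge2$, \[\mathcal U_\ell(B_n)=\ell-q_{\ell,n}(n-2)+(n-2)\cdot[0,\,q_{\ell,n}+\ell-1],\] where $q_{\ell,n}=\lfloor \ell/(n-1)\rfloor$ if $(n-1)\nmid \ell$ and $q_{\ell,n}=\frac{\ell}{n-1}-1$ if $(n-1)\mid\ell$.
   Context: $B_n$ is the monoid with generators $a,b$ and the single relation $ba=b^n$; it is reduced and atomic with atoms $a,b$. $\mathsf L(y)$ is the set of all $k$ such that $y$ is a product of $k$ atoms ($\mathsf L(1)=\{0\}$), $\mathcal L(B_n)=\{\mathsf L(y)\}$. For $L\subset\mathbb N_0$, $\rho(L)=\sup(L\cap\mathbb N)/\min(L\cap\mathbb N)$ if $L\cap\mathbb N\ne\emptyset$ and $\rho(L)=1$ otherwise; $\rho(B_n)=\sup_{L\in\mathcal L(B_n)}\rho(L)$. $\mathcal U_\ell(B_n)=\bigcup\{L\in\mathcal L(B_n)\mid \ell\in L\}$. Notation: $m+d\cdot[0,q]=\{m,m+d,\dots,m+qd\}$. *)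

(* Defs.v *)
From Stdlib Require Import Reals List Relations ClassicalEpsilon Arith.
Import ListNotations.
Open Scope R_scope.

(* Atoms of B_n = <a,b | ba = b^n>. Elements of B_n are represented by words
   over {a,b}; two words represent the same element iff they are related by
   the congruence generated by ba = b^n. *)
Inductive letter := LA | LB.

Definition step (n : nat) (u v : list letter) : Prop :=
  exists x y, u = x ++ [LB; LA] ++ y /\ v = x ++ repeat LB n ++ y.

Definition cong (n : nat) : relation (list letter) :=
  clos_refl_sym_trans (list letter) (step n).

(* L(y) for y the element represented by the word w: the set of all k such
   that y is a product of k atoms (a factorization = a word equal to y in B_n) *)
Definition Lset (n : nat) (w : list letter) : nat -> Prop :=
  fun k => exists w', cong n w w' /\ length w' = k.

Inductive ext := Fin (r : R) | Inf.

Definition ext_lt (x y : ext) : Prop :=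
  match x, y with
  | Fin a, Fin b => a < b
  | Fin _, Inf => True
  | Inf, _ => False
  end.

Definition LN (L : nat -> Prop) (k : nat) : Prop := L k /\ (0 < k)%nat.

Definition nat_min (L : nat -> Prop) : nat :=
  epsilon (inhabits 0%nat) (fun m => LN L m /\ forall k, LN L k -> (m <= k)%nat).

Definition nat_sup (L : nat -> Prop) : ext :=
  match excluded_middle_informative (exists M, forall k, LN L k -> (k <= M)%nat) with
  | left _ => Fin (INR (epsilon (inhabits 0%nat)
                        (fun m => LN L m /\ forall k, LN L k -> (k <= m)%nat)))
  | right _ => Inf
  end.

Definition rho (L : nat -> Prop) : ext :=
  match excluded_middle_informative (exists k, LN L k) with
  | right _ => Fin 1
  | left _ =>
      match nat_sup L with
      | Fin s => Fin (s / INR (nat_min L))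
      | Inf => Inf
      end
  end.

Definition ext_sup (E : R -> Prop) : ext :=
  match excluded_middle_informative (exists x, is_lub E x) with
  | left _ => Fin (epsilon (inhabits 0) (is_lub E))
  | right _ => Inf
  end.

Definition rho_Bn (n : nat) : ext :=
  match excluded_middle_informative (exists w, rho (Lset n w) = Inf) with
  | left _ => Inf
  | right _ => ext_sup (fun x => exists w, rho (Lset n w) = Fin x)
  end.

Definition Uset (n l : nat) : nat -> Prop :=
  fun k => exists w, Lset n w l /\ Lset n w k.

Definition AP (m d q : nat) : nat -> Prop :=
  fun k => exists i, (i <= q)%nat /\ k = (m + d * i)%nat.

Definition qln (l n : nat) : nat :=
  if Nat.eqb (Nat.modulo l (n - 1)) 0 then (Nat.div l (n - 1) - 1)%nat
  else Nat.div l (n - 1).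

(* Main.v *)
Require Import Defs.
From Stdlib Require Import Reals List Arith Lia Lra ClassicalEpsilon Relations.
Import ListNotations.
Open Scope R_scope.

Fixpoint inv (n : nat) (w : list letter) : nat * nat :=
  match w with
  | [] => (0%nat, 0%nat)
  | LA :: w' => (S (fst (inv n w')), snd (inv n w'))
  | LB :: w' => (0%nat, (1 + (n - 1) * fst (inv n w') + snd (inv n w'))%nat)
  end.

Lemma inv_app n x y y' : inv n y = inv n y' -> inv n (x ++ y) = inv n (x ++ y').
Proof. intros H; induction x as [|[] x IH]; simpl; try rewrite IH; auto. Qed.

Lemma inv_repB n k y : inv n (repeat LB (S k) ++ y) =
   (0%nat, (S k + (n-1) * fst (inv n y) + snd (inv n y))%nat).
Proof. induction k.
  - simpl. f_equal.
  - change (repeat LB (S (S k)) ++ y) with (LB :: (repeat LB (S k) ++ y)).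
    cbn [inv]. rewrite IHk. simpl. f_equal. lia. Qed.

Lemma inv_step n u v : (1 <= n)%nat -> step n u v -> inv n u = inv n v.
Proof.
  intros Hn [x [y [-> ->]]]. apply inv_app.
  destruct n as [|n]; [lia|]. rewrite inv_repB. simpl. f_equal.
  rewrite Nat.sub_0_r, Nat.mul_succ_r. lia.
Qed.

Lemma cong_inv n u v : (1 <= n)%nat -> cong n u v -> inv n u = inv n v.
Proof.
  intros Hn H; induction H; auto.
  - apply inv_step; auto.
  - congruence.
Qed.

Lemma cong_ctx n u v p s : cong n u v -> cong n (p ++ u ++ s) (p ++ v ++ s).
Proof.
  intros H; induction H.
  - apply rst_step. destruct H as [x0 [y0 [-> ->]]].
    exists (p ++ x0), (y0 ++ s). rewrite !app_assoc. split; reflexivity.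
  - apply rst_refl.
  - apply rst_sym; auto.
  - eapply rst_trans; eauto.
Qed.

Definition canon (im : nat * nat) := repeat LA (fst im) ++ repeat LB (snd im).

Lemma repeat_S_r (x : letter) k : repeat x (S k) = repeat x k ++ [x].
Proof. replace (S k) with (k + 1)%nat by lia. apply repeat_app. Qed.

Lemma cong_bA n i z : (1 <= n)%nat ->
  cong n (LB :: repeat LA i ++ z) (repeat LB (1 + (n-1) * i) ++ z).
Proof.
  intros Hn. revert z; induction i; intros z.
  - rewrite Nat.mul_0_r. apply rst_refl.
  - rewrite repeat_S_r, <- app_assoc. simpl (_ ++ z).
    eapply rst_trans; [apply IHi|].
    apply rst_step. exists (repeat LB ((n-1)*i)), z. split.
    + replace (1 + (n-1)*i)%nat with ((n-1)*i + 1)%nat by lia.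
      rewrite (repeat_app LB ((n-1)*i) 1), <- app_assoc. reflexivity.
    + change (LB :: repeat LB ((n-1)*S i) ++ z) with (repeat LB (S ((n-1)*S i)) ++ z).
      replace (S ((n-1)*S i))%nat with ((n-1)*i + n)%nat by (rewrite Nat.mul_succ_r; lia).
      rewrite (repeat_app LB ((n-1)*i) n), <- app_assoc. reflexivity.
Qed.

Lemma cong_canon n w : (1 <= n)%nat -> cong n w (canon (inv n w)).
Proof.
  intros Hn; induction w as [|[] w IH].
  - apply rst_refl.
  - unfold canon in *; simpl.
    pose proof (cong_ctx n _ _ [LA] [] IH) as H. rewrite !app_nil_r in H. exact H.
  - unfold canon in *; simpl.
    pose proof (cong_ctx n _ _ [LB] [] IH) as H. rewrite !app_nil_r in H.
    eapply rst_trans; [exact H|]. simpl.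
    pose proof (cong_bA n (fst (inv n w)) (repeat LB (snd (inv n w))) Hn) as H2.
    rewrite <- repeat_app in H2. exact H2.
Qed.

Lemma cong_iff n w w' : (1 <= n)%nat -> cong n w w' <-> inv n w = inv n w'.
Proof.
  intros Hn; split; [apply cong_inv; auto|].
  intros E. eapply rst_trans; [apply cong_canon; auto|]. rewrite E.
  apply rst_sym, cong_canon; auto.
Qed.

Definition P n i m k : Prop :=
  (m = 0 /\ k = i)%nat \/
  ((1 <= m)%nat /\ exists t, ((n-1)*t + 1 <= m /\ k + (n-2)*t = i + m)%nat).

Lemma len_P n w : (2 <= n)%nat -> P n (fst (inv n w)) (snd (inv n w)) (length w).
Proof.
  intros Hn. assert (E: (n-1 = S (n-2))%nat) by lia.
  induction w as [|[] w IH]; simpl; unfold P in *.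
  - left; auto.
  - destruct IH as [[-> ->]|[H1 [t [H2 H3]]]]; [left; auto|right; split; auto].
    exists t; split; lia.
  - right. rewrite E in *. set (d := (n-2)%nat) in *. split; [lia|].
    destruct IH as [[-> ->]|[H1 [t [H2 H3]]]].
    + exists (fst (inv n w)). simpl. lia.
    + exists (t + fst (inv n w))%nat. simpl. nia.
Qed.

Lemma inv_repA n i y : inv n (repeat LA i ++ y) = ((i + fst (inv n y))%nat, snd (inv n y)).
Proof. induction i; simpl; [destruct (inv n y); auto|rewrite IHi; auto]. Qed.

Lemma inv_repB' n r : inv n (repeat LB r) = (0%nat, r).
Proof. destruct r. reflexivity. rewrite <- (app_nil_r (repeat LB (S r))), inv_repB.
  simpl. f_equal. lia. Qed.

Lemma P_real n i m k : (2 <= n)%nat -> P n i m k -> exists w, inv n w = (i, m) /\ length w = k.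
Proof.
  intros Hn [[-> ->]|[H1 [t [H2 H3]]]].
  - exists (repeat LA i). rewrite <- (app_nil_r (repeat LA i)), inv_repA, app_nil_r,
      repeat_length. simpl. rewrite Nat.add_0_r. split; auto.
  - exists (repeat LA i ++ LB :: repeat LA t ++ repeat LB (m - 1 - (n-1)*t)).
    rewrite inv_repA. simpl. rewrite inv_repA, inv_repB'. simpl.
    rewrite length_app, repeat_length. simpl. rewrite length_app, !repeat_length.
    split.
    + f_equal; lia.
    + remember (n-2)%nat as d. replace (n-1)%nat with (S d) in * by lia. simpl in *. lia.
Qed.

Lemma Lset_P n w k : (2 <= n)%nat ->
  Lset n w k <-> P n (fst (inv n w)) (snd (inv n w)) k.
Proof.
  intros Hn; split.
  - intros [w' [Hc <-]]. apply cong_inv in Hc; [|lia]. rewrite Hc. apply len_P; auto.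
  - intros HP. destruct (P_real n _ _ _ Hn HP) as [w' [E L]]. exists w'. split; auto.
    apply cong_iff; [lia|]. rewrite E. destruct (inv n w); reflexivity.
Qed.

Lemma rho_eq (L : nat -> Prop) M mu : LN L M -> LN L mu ->
  (forall k, LN L k -> (mu <= k <= M)%nat) -> rho L = Fin (INR M / INR mu).
Proof.
  intros HM Hmu B. unfold rho.
  destruct (excluded_middle_informative (exists k, LN L k)) as [_|C]; [|exfalso; eauto].
  assert (E1 : nat_sup L = Fin (INR M)).
  { unfold nat_sup.
    destruct (excluded_middle_informative _) as [_|C].
    - f_equal. f_equal.
      pose proof (epsilon_spec (inhabits 0%nat)
        (fun m => LN L m /\ forall k, LN L k -> (k <= m)%nat)) as S.
      destruct S as [S1 S2].
      + exists M. split; auto. intros k Hk; apply B; auto.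
      + specialize (S2 M HM). specialize (B _ S1). lia.
    - exfalso; apply C. exists M. intros k Hk; apply B; auto. }
  assert (E2 : nat_min L = mu).
  { unfold nat_min.
    pose proof (epsilon_spec (inhabits 0%nat)
        (fun m => LN L m /\ forall k, LN L k -> (m <= k)%nat)) as S.
    destruct S as [S1 S2].
    + exists mu. split; auto. intros k Hk; apply B; auto.
    + specialize (S2 mu Hmu). specialize (B _ S1). lia. }
  rewrite E1, E2. reflexivity.
Qed.

Lemma rho_empty (L : nat -> Prop) : (forall k, ~ LN L k) -> rho L = Fin 1.
Proof.
  intros H. unfold rho.
  destruct (excluded_middle_informative (exists k, LN L k)) as [[k Hk]|_]; auto.
  exfalso; eapply H; eauto.
Qed.

Lemma rho_word n w T : (3 <= n)%nat -> (1 <= snd (inv n w))%nat ->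
  ((n-1)*T + 1 <= snd (inv n w) <= (n-1)*(T+1))%nat ->
  rho (Lset n w) = Fin (INR (fst (inv n w) + snd (inv n w)) /
                        INR (fst (inv n w) + snd (inv n w) - (n-2)*T)).
Proof.
  intros Hn Hm HT. set (i := fst (inv n w)) in *. set (m := snd (inv n w)) in *.
  replace (n-1)%nat with (S (n-2)) in * by lia.
  set (d := (n-2)%nat) in *. assert (Hd : (1 <= d)%nat) by lia.
  assert (d * T <= m)%nat by nia.
  apply rho_eq; unfold LN; rewrite ?Lset_P by lia; fold i m; unfold P.
  - split; [|lia]. right; split; auto. exists 0%nat. replace (n-1)%nat with (S d) by lia. lia.
  - split; [|nia]. right; split; auto. exists T. replace (n-1)%nat with (S d) by lia.
    fold d. split; lia.
  - intros k [Hk0 Hk]. apply Lset_P in Hk0; [|lia]. fold i m in Hk0. unfold P in Hk0.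
    destruct Hk0 as [[Em Ek]|[_ [t [A B]]]]; [lia|].
    replace (n-1)%nat with (S d) in A by lia. fold d in B.
    assert (t <= T)%nat.
    { destruct (Nat.le_gt_cases t T) as [|G]; auto.
      assert (S d * (T+1) <= S d * t)%nat by (apply Nat.mul_le_mono_l; lia). lia. }
    assert (d*t <= d*T)%nat by (apply Nat.mul_le_mono_l; lia).
    lia.
Qed.

Lemma rho_bound n w : (3 <= n)%nat -> exists x, rho (Lset n w) = Fin x /\ x < INR (n-1).
Proof.
  intros Hn.
  assert (H1 : 1 < INR (n-1)) by (replace 1 with (INR 1) by reflexivity; apply lt_INR; lia).
  destruct (Nat.eq_dec (snd (inv n w)) 0) as [Em|Em].
  - destruct (Nat.eq_dec (fst (inv n w)) 0) as [Ei|Ei].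
    + exists 1. split; auto. apply rho_empty. intros k [Hk Hk0].
      apply Lset_P in Hk; [|lia]. unfold P in Hk. lia.
    + exists (INR (fst (inv n w)) / INR (fst (inv n w))). split.
      * apply rho_eq; unfold LN; rewrite ?Lset_P by lia; unfold P; try lia.
        intros k [Hk0 _]. apply Lset_P in Hk0; [|lia]. unfold P in Hk0. lia.
      * unfold Rdiv. rewrite Rinv_r; auto. apply not_0_INR; auto.
  - set (T := ((snd (inv n w) - 1) / (n-1))%nat).
    pose proof (Nat.div_mod (snd (inv n w) - 1) (n-1) ltac:(lia)) as D.
    pose proof (Nat.mod_upper_bound (snd (inv n w) - 1) (n-1) ltac:(lia)) as U.
    fold T in D.
    rewrite (rho_word n w T Hn ltac:(lia)) by nia.
    eexists; split; [reflexivity|].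
    set (i := fst (inv n w)) in *. set (m := snd (inv n w)) in *.
    replace (n-1)%nat with (S (n-2)) in * by lia.
    set (d := (n-2)%nat) in *. assert (Hd : (1 <= d)%nat) by lia.
    set (r := ((m - 1) mod S d)%nat) in *.
    set (mu := (i + m - d*T)%nat).
    assert (Hmu : (T < mu)%nat) by (unfold mu; nia).
    assert (Hk : (i + m < S d * mu)%nat).
    { assert (d*T < d*mu)%nat by (apply Nat.mul_lt_mono_pos_l; lia). unfold mu in *. nia. }
    assert (0 < INR mu) by (apply lt_0_INR; lia).
    apply lt_INR in Hk. rewrite mult_INR in Hk.
    apply (Rmult_lt_reg_r (INR mu)); auto.
    unfold Rdiv. rewrite Rmult_assoc, Rinv_l by lra. lra.
Qed.

Lemma qln_spec l n : (2 <= l)%nat -> (3 <= n)%nat ->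
  ((n-1)*qln l n + 1 <= l /\ l <= (n-1)*(qln l n + 1))%nat.
Proof.
  intros Hl Hn. unfold qln.
  pose proof (Nat.div_mod l (n-1) ltac:(lia)) as D.
  pose proof (Nat.mod_upper_bound l (n-1) ltac:(lia)) as U.
  set (d := (n-1)%nat) in *. set (q := (l / d)%nat) in *. set (r := (l mod d)%nat) in *.
  destruct (Nat.eqb_spec r 0) as [E|E].
  - assert (1 <= q)%nat by nia. replace (q - 1 + 1)%nat with q by lia. nia.
  - nia.
Qed.

Lemma U_arith n l k q : (3 <= n)%nat -> (2 <= l)%nat ->
  ((n-1)*q + 1 <= l /\ l <= (n-1)*(q + 1))%nat ->
  (exists i m, P n i m l /\ P n i m k) <->
  (exists j, j <= q + l - 1 /\ k = l - q*(n-2) + (n-2)*j)%nat.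
Proof.
  intros Hn Hl [Q1 Q2]. unfold P.
  replace (n-1)%nat with (S (n-2)) in * by lia.
  set (d := (n-2)%nat) in *. assert (Hd : (1 <= d)%nat) by lia. clearbody d.
  split.
  - intros [i [m [H1 H2]]].
    destruct H1 as [[Em El]|[H1 [t1 [A1 B1]]]].
    + destruct H2 as [[_ Ek]|[H2 _]]; [|lia].
      exists q. split; [lia|]. assert (q*d <= l)%nat by nia. nia.
    + destruct H2 as [[Em Ek]|[_ [t2 [A2 B2]]]]; [lia|].
      assert (t1 + 1 <= l)%nat by nia.
      assert (t2 <= q + t1)%nat.
      { destruct (Nat.le_gt_cases t2 (q + t1)) as [|G]; auto.
        exfalso. assert (S d * (q+1) <= S d * (t2 - t1))%nat by (apply Nat.mul_le_mono_l; lia).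
        assert (S d * (t2 - t1) = S d * t2 - S d * t1)%nat by (rewrite Nat.mul_sub_distr_l; auto).
        nia. }
      exists (q + t1 - t2)%nat. split; [lia|].
      assert (q*d <= l)%nat by nia.
      assert (d * (q + t1 - t2) = d*q + d*t1 - d*t2)%nat by (rewrite Nat.mul_sub_distr_l; nia).
      assert (d * t2 <= d*q + d*t1)%nat by nia.
      nia.
  - intros [j [Hj ->]].
    assert (q*d <= l)%nat by nia.
    destruct (Nat.le_gt_cases j q) as [Jq|Jq].
    + exists 0%nat, l. split; right; split; try lia.
      * exists 0%nat. lia.
      * exists (q - j)%nat.
        assert (d * (q - j) = d*q - d*j)%nat by (rewrite Nat.mul_sub_distr_l; auto).
        assert (S d * (q - j) <= S d * q)%nat by (apply Nat.mul_le_mono_l; lia).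
        assert (d*j <= d*q)%nat by (apply Nat.mul_le_mono_l; lia).
        split; nia.
    + exists 0%nat, (l + d*(j-q))%nat. split; right; split; try lia.
      * exists (j - q)%nat. nia.
      * exists 0%nat.
        assert (d * (j - q) = d*j - d*q)%nat by (rewrite Nat.mul_sub_distr_l; auto).
        assert (d*q <= d*j)%nat by (apply Nat.mul_le_mono_l; lia).
        nia.
Qed.

Lemma part2 n (Hn : (3 <= n)%nat) l : (2 <= l)%nat -> forall k,
  Uset n l k <-> AP (l - qln l n * (n - 2)) (n - 2) (qln l n + l - 1) k.
Proof.
  intros Hl k. unfold AP.
  rewrite <- (U_arith n l k (qln l n) Hn Hl (qln_spec l n Hl Hn)).
  unfold Uset. split.
  - intros [w [H1 H2]]. apply Lset_P in H1; [|lia]. apply Lset_P in H2; [|lia]. eauto.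
  - intros [i [m [H1 H2]]]. destruct (P_real n i m l ltac:(lia) H1) as [w [E _]].
    exists w. rewrite !Lset_P by lia. rewrite E. simpl. auto.
Qed.

Lemma rho_special n T : (3 <= n)%nat ->
  rho (Lset n (repeat LB ((n-1)*T+1))) = Fin (INR ((n-1)*T+1) / INR (T+1)).
Proof.
  intros Hn.
  assert (E : inv n (repeat LB ((n-1)*T+1)) = (0%nat, ((n-1)*T+1)%nat)) by apply inv_repB'.
  rewrite (rho_word n _ T Hn); rewrite E; simpl; try nia.
  f_equal. f_equal. f_equal.
  replace (n-1)%nat with (S (n-2)) by lia. set (d := (n-2)%nat). simpl. lia.
Qed.

Lemma part1 n (Hn : (3 <= n)%nat) :
  rho_Bn n = Fin (INR (n - 1)) /\
   forall w : list letter, ext_lt (rho (Lset n w)) (Fin (INR (n - 1))).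
Proof.
  set (E := fun x => exists w, rho (Lset n w) = Fin x).
  assert (Hlub : is_lub E (INR (n-1))).
  { split.
    - intros x [w Hw]. destruct (rho_bound n w Hn) as [y [Hy Hlt]].
      rewrite Hw in Hy. injection Hy as ->. lra.
    - intros b Hb. destruct (Rle_lt_dec (INR (n-1)) b) as [|Hlt]; auto. exfalso.
      set (D := INR (n-2)).
      assert (HD : 0 < D) by (apply lt_0_INR; lia).
      assert (HD1 : INR (n-1) = D + 1).
      { replace (n-1)%nat with (S (n-2)) by lia. rewrite S_INR. reflexivity. }
      destruct (archimed_cor1 ((INR (n-1) - b) / D)) as [N [HN HN0]].
      { apply Rdiv_lt_0_compat; lra. }
      set (T := (N - 1)%nat).
      assert (Ev : E (INR ((n-1)*T+1) / INR (T+1))).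
      { exists (repeat LB ((n-1)*T+1)). apply rho_special; auto. }
      apply Hb in Ev.
      replace (T+1)%nat with N in Ev by lia.
      rewrite plus_INR, mult_INR, HD1 in Ev. simpl (INR 1) in Ev.
      assert (HT : INR T + 1 = INR N).
      { replace N with (T+1)%nat by lia. rewrite plus_INR. reflexivity. }
      assert (HNp : 0 < INR N) by (apply lt_0_INR; lia).
      rewrite <- HT in Ev, HN.
      replace (((D + 1) * INR T + 1) / (INR T + 1)) with (D + 1 - D * / (INR T + 1)) in Ev
        by (field; lra).
      assert (D * / (INR T + 1) < D * ((INR (n - 1) - b) / D)).
      { apply Rmult_lt_compat_l; auto. }
      replace (D * ((INR (n - 1) - b) / D)) with (INR (n-1) - b) in H by (field; lra).
      lra. }
  split.
  - unfold rho_Bn.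
    destruct (excluded_middle_informative _) as [[w Hw]|_].
    + destruct (rho_bound n w Hn) as [y [Hy _]]. congruence.
    + unfold ext_sup. fold E.
      destruct (excluded_middle_informative _) as [_|C].
      * f_equal. apply (is_lub_u E); auto. apply epsilon_spec. eauto.
      * exfalso; apply C; eauto.
  - intros w. destruct (rho_bound n w Hn) as [y [Hy Hlt]]. rewrite Hy. exact Hlt.
Qed.

Theorem corollary4p3 (n : nat) (Hn : (3 <= n)%nat) :
  (rho_Bn n = Fin (INR (n - 1)) /\
   forall w : list letter, ext_lt (rho (Lset n w)) (Fin (INR (n - 1)))) /\
  (forall l : nat, (2 <= l)%nat ->
     forall k : nat,
       Uset n l k <->
       AP (l - qln l n * (n - 2)) (n - 2) (qln l n + l - 1) k).
Proof.
  split; [apply part1; auto|]. intros l Hl k. apply part2; auto.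
Qed.
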